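(* Let $d\ge1$ and let $1\le k\le 2d$ be an integer with $k(k-1)<2d(2d-1)/c(d)$. Then $\theta^{\rm B}(k,d)=0$.
   Context: For integers $d\ge1$ and $1\le k\le 2d$, let each vertex $x\in\mathbb{Z}^d$, independently of all others, choose a uniformly random subset of exactly $k$ of its $2d$ nearest neighbors (in $\ell_1$-distance). The bidirectional $k$-neighbor graph ($k$-BnG) on $\mathbb{Z}^d$ has an undirected edge between nearest neighbors $x,y$ if and only if $x$ chose $y$ and $y$ chose $x$. We write $\theta^{\rm B}(k,d)=\mathbb{P}(o\rightsquigarrow\infty\text{ in the $k$-BnG on }\mathbb{Z}^d)$, where $o$ is the origin and $o\rightsquigarrow\infty$ is the event that there is an infinite self-avoiding path of edges of the $k$-BnG starting at $o$. The connective constant of $\mathbb{Z}^d$ is $c(d)=\lim_{n\to\infty}c_n(d)^{1/n}$, where $c_n(d)$ is the number of self-avoiding nearest-neighbor paths of length $n$ in $\mathbb{Z}^d$ starting at the origin. *)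

(* Defs.v *)
From HB Require Import structures.
From mathcomp Require Import all_boot all_order all_algebra.
From mathcomp Require Import all_classical all_reals all_analysis.
Set Implicit Arguments. Unset Strict Implicit. Unset Printing Implicit Defensive.
Import Order.TTheory GRing.Theory Num.Theory.
Local Open Scope classical_set_scope.
Local Open Scope ring_scope.

Definition site (d : nat) := {ffun 'I_d -> int}.

(* The 2d nearest-neighbour directions: (i, true) is +e_i, (i, false) is -e_i. *)
Definition dir (d : nat) := ('I_d * bool)%type.

Definition step (d : nat) (v : dir d) : site d :=
  [ffun j => if j == v.1 then (if v.2 then 1 else -1) else 0].

Definition origin (d : nat) : site d := [ffun => 0].

Definition opp_dir (d : nat) (v : dir d) : dir d := (v.1, ~~ v.2).

Fixpoint traj (d : nat) (x : site d) (w : seq (dir d)) : seq (site d) :=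
  match w with
  | [::] => [:: x]
  | v :: w' => x :: traj (x + step v) w'
  end.

Definition saw_count (d n : nat) : nat :=
  #|[set w : n.-tuple (dir d) | uniq (traj (origin d) w)]|.

Definition conn_const (R : realType) (d : nat) : R :=
  limn (fun n : nat => ((saw_count d n)%:R : R) `^ (n%:R)^-1).

Definition unif_k (R : realType) (d k : nat) (S : {set dir d}) : R :=
  if #|S| == k then ('C(2 * d, k)%:R)^-1 else 0.

(* C : site d -> Omega -> {set dir d} is a family of independent choices,
   each a uniformly random k-subset of the 2d neighbours: all the events
   {C x = S} are measurable and every finite-dimensional joint law is
   the product of the uniform laws. *)
Definition iid_uniform_choices (R : realType) (dd : measure_display)
  (Omega : measurableType dd) (P : probability Omega R) (d k : nat)
  (C : site d -> Omega -> {set dir d}) : Prop :=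
  (forall x S, measurable (C x @^-1` [set S])) /\
  (forall (s : seq (site d)) (S : site d -> {set dir d}), uniq s ->
     P (\big[setI/setT]_(x <- s) (C x @^-1` [set S x]))
     = (\prod_(x <- s) @unif_k R d k (S x))%:E).

Definition bng_edge (d : nat) (Omega : Type) (C : site d -> Omega -> {set dir d})
  (om : Omega) (x y : site d) : Prop :=
  exists v : dir d, y = x + step v /\ v \in C x om /\ opp_dir v \in C y om.

Definition percolates (d : nat) (Omega : Type) (C : site d -> Omega -> {set dir d})
  (om : Omega) : Prop :=
  exists p : nat -> site d,
    p 0%N = origin d /\ injective p /\ forall n, bng_edge C om (p n) (p n.+1).

(* Main.v *)
Require Import Defs.
From HB Require Import structures.
From mathcomp Require Import all_boot all_order all_algebra.
From mathcomp Require Import all_classical all_reals all_analysis.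
From mathcomp Require Import zify.
Import Order.TTheory GRing.Theory Num.Theory numFieldNormedType.Exports.
Local Open Scope classical_set_scope.
Local Open Scope ring_scope.
Set Implicit Arguments. Unset Strict Implicit. Unset Printing Implicit Defensive.

Section Konig.
Context (d : nat) (Omega : Type) (C : site d -> Omega -> {set dir d}) (om : Omega).

Definition eopen x v := (v \in C x om) && (opp_dir v \in C (x + step v) om).
Fixpoint wopen x (w : seq (dir d)) : bool :=
  if w is v :: w' then eopen x v && wopen (x + step v) w' else true.

Definition good (vis : seq (site d)) (x : site d) : Prop :=
  forall m, exists u : seq (dir d),
    (m <= size u)%N /\ wopen x u /\ uniq (vis ++ traj x u).

Lemma good_next vis x : good vis x ->
  exists v, eopen x v /\ good (rcons vis x) (x + step v).
Proof.
move=> g; apply/not_existsP => N.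
have H v : exists m : nat, forall u : seq (dir d), (m <= size u)%N ->
    eopen x v -> wopen (x + step v) u -> ~~ uniq (rcons vis x ++ traj (x + step v) u).
  have [ev|nev] := boolP (eopen x v); last by exists 0%N.
  have : ~ good (rcons vis x) (x + step v) by move=> gg; apply: (N v).
  move/existsNP => [m /forallNP Hm]; exists m => u mu _ wu; apply/negP => uu.
  by apply: (Hm u).
have [f Hf] := choice H.
have [u [Mu [wu uu]]] := g (\max_(v : dir d) f v).+1.
case: u Mu wu uu => [//|v u] /= Mu /andP[ev wu] uu.
have := Hf v u; rewrite cat_rcons uu /=.
suff fv : (f v <= size u)%N by move/(_ fv ev wu).
by rewrite ltnS in Mu; apply: leq_trans Mu; apply: leq_bigmax.
Qed.

End Konig.
Section Konig2.
Context (d : nat) (Omega : Type) (C : site d -> Omega -> {set dir d}) (om : Omega).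

Definition Aev n := exists w : n.-tuple (dir d),
  uniq (traj (origin d) w) && wopen C om (origin d) w.

Lemma konig : (forall n, Aev n) -> percolates C om.
Proof.
move=> A.
have g0 : good C om [::] (origin d).
  by move=> m; have [w /andP[u o]] := A m; exists w; rewrite size_tuple.
have [w1 _] := A 1%N; pose v0 := thead w1.
have H (s : seq (site d) * site d) : exists v : dir d, good C om s.1 s.2 ->
    eopen C om s.2 v /\ good C om (rcons s.1 s.2) (s.2 + step v).
  have [gs|ngs] := pselect (good C om s.1 s.2); last by exists v0.
  by have [v Hv] := good_next gs; exists v.
have [f Hf] := choice H.
pose fix st n : seq (site d) * site d :=
  if n is n'.+1 then (rcons (st n').1 (st n').2, (st n').2 + step (f (st n')))
  else ([::], origin d).
pose p n := (st n).2.
have gst n : good C om (st n).1 (st n).2.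
  by elim: n => [//|n IH] /=; have [] := Hf _ IH.
have stE n : (st n).1 = [seq p i | i <- iota 0 n].
  by elim: n => [//|n IH]; rewrite [LHS]/= IH -cats1 -addn1 iotaD map_cat.
have pn n : p n \notin (st n).1.
  have [u [_ [_ uu]]] := gst n 0%N.
  move: uu; rewrite cat_uniq => /and3P[_ + _]; apply: contraNN => pin.
  by apply/hasP; exists (p n) => //; case: u => [|? ?] /=; rewrite mem_head.
exists p; split => //; split.
  suff lt m n : (m < n)%N -> p m <> p n.
    move=> m n e; apply/eqP; case: (ltngtP m n) => // mn; exfalso.
    - exact: lt mn e.
    - exact: lt mn (esym e).
  move=> mn e; move: (pn n); rewrite stE -e.
  by move/negP; apply; apply/mapP; exists m => //; rewrite mem_iota.
move=> n; exists (f (st n)); split => //.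
have [/andP[e1 e2] _] := Hf _ (gst n).
by split.
Qed.

End Konig2.
Section PercA.
Context (d : nat) (Omega : Type) (C : site d -> Omega -> {set dir d}) (om : Omega).

Lemma perc_Aev n : percolates C om -> Aev C om n.
Proof.
move=> [p [p0 [pinj pe]]].
have [g Hg] := choice pe.
have trE j m : traj (p m) (map g (iota m j)) = map p (iota m j.+1).
  elim: j m => [//|j IH] m /=.
  by have [e1 _] := Hg m; rewrite -e1 IH.
have woE j m : wopen C om (p m) (map g (iota m j)).
  elim: j m => [//|j IH] m /=.
  have [e1 [e2 e3]] := Hg m.
  by rewrite /eopen e2 -e1 e3 IH.
have sz : size (map g (iota 0 n)) == n by rewrite size_map size_iota.
exists (Tuple sz) => /=; rewrite -p0 trE woE andbT.
by rewrite map_inj_uniq // iota_uniq.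
Qed.

End PercA.
Section Meas.
Context (R : realType) (dd : measure_display) (Omega : measurableType dd)
  (P : probability Omega R) (d k : nat) (C : site d -> Omega -> {set dir d}).
Hypothesis hm : forall x S, measurable (C x @^-1` [set S]).

Definition Cin x (T : {set {set dir d}}) := [set om | C x om \in T].

Lemma Cin_meas x T : measurable (Cin x T).
Proof.
have -> : Cin x T = \bigcup_(S in [set S | S \in T]) (C x @^-1` [set S]).
  apply/seteqP; split => om /=.
    by move=> h; exists (C x om).
  by move=> [S /= ST e]; rewrite /Cin /= e.
exact: (fin_bigcup_measurable finite_finset (fun S _ => hm x S)).
Qed.

Lemma eopen_meas x v : measurable [set om | eopen C om x v].
Proof.
have -> : [set om | eopen C om x v] =
   Cin x [set S : {set dir d} | v \in S]%SET `&`
   Cin (x + step v) [set S : {set dir d} | opp_dir v \in S]%SET.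
  by apply/seteqP; split => om /=; rewrite /Cin /eopen /= !inE => /andP.
by apply: measurableI; apply: Cin_meas.
Qed.

Lemma wopen_meas x w : measurable [set om | wopen C om x w].
Proof.
elim: w x => [|v w IH] x /=; first by rewrite (_ : [set om | true] = setT) //; apply/seteqP; split.
have -> : [set om | eopen C om x v && wopen C om (x + step v) w] =
   [set om | eopen C om x v] `&` [set om | wopen C om (x + step v) w].
  by apply/seteqP; split => om /=; move/andP.
by apply: measurableI; [apply: eopen_meas | apply: IH].
Qed.

Lemma AevE n : [set om | Aev C om n] =
  \bigcup_(w in [set w : n.-tuple (dir d) | uniq (traj (origin d) w)])
     [set om | wopen C om (origin d) w].
Proof.
apply/seteqP; split => om /=.
  by move=> [w /andP[u o]]; exists w.
by move=> [w /= u o]; exists w; rewrite u o.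
Qed.

Lemma Aev_meas n : measurable [set om | Aev C om n].
Proof.
rewrite AevE; apply: fin_bigcup_measurable; first exact: finite_finset.
by move=> w _; apply: wopen_meas.
Qed.

Lemma percE : [set om | percolates C om] = \bigcap_n [set om | Aev C om n].
Proof.
apply/seteqP; split => om /=.
  by move=> pc n _; apply: perc_Aev.
by move=> h; apply: konig => n; apply: h.
Qed.

Lemma perc_meas : measurable [set om | percolates C om].
Proof. by rewrite percE; apply: bigcap_measurableType => n _; apply: Aev_meas. Qed.

End Meas.
Section Prob.
Context (R : realType) (dd : measure_display) (Omega : measurableType dd)
  (P : probability Omega R) (d k : nat) (C : site d -> Omega -> {set dir d}).
Hypothesis hC : iid_uniform_choices P k C.

Lemma mem_bigsetI (I : eqType) (r : seq I) (F : I -> set Omega) om :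
  (\big[setI/setT]_(i <- r) F i) om <-> (forall i, i \in r -> F i om).
Proof.
elim: r => [|i r IH]; first by rewrite big_nil; split.
rewrite big_cons; split.
  by move=> [Fi /IH h] j; rewrite inE => /orP[/eqP->|/h].
by move=> h; split; [apply: h; rewrite mem_head | apply/IH => j jr; apply: h; rewrite inE jr orbT].
Qed.

Lemma mem_bigsetU (I : eqType) (r : seq I) (Pr : pred I) (F : I -> set Omega) om :
  (exists i, [/\ i \in r, Pr i & F i om]) -> (\big[setU/set0]_(i <- r | Pr i) F i) om.
Proof.
elim: r => [|j r IH] [i [ir Pi Fi]]; first by rewrite in_nil in ir.
rewrite big_cons; move: ir; rewrite inE => /orP[/eqP eij|ir].
  by subst j; rewrite Pi; left.
by case: ifP => _; [right|]; apply: IH; exists i.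
Qed.

Lemma msub (I : Type) (r : seq I) (Pr : pred I) (F : I -> set Omega) :
  (forall i, measurable (F i)) ->
  (P (\big[setU/set0]_(i <- r | Pr i) F i) <= \sum_(i <- r | Pr i) P (F i))%E.
Proof.
move=> mF; elim: r => [|i r IH]; first by rewrite !big_nil measure0.
rewrite !big_cons; case: ifP => // _.
apply: le_trans (measureU2 _ _ _) _ => //; first exact: bigsetU_measurable.
by apply: leeD.
Qed.

Definition muT (T : {set {set dir d}}) : R := \sum_(S in T) @unif_k R d k S.

Definition pts (s : seq (site d)) (S : site d -> {set dir d}) :=
  \big[setI/setT]_(x <- s) (C x @^-1` [set S x]).

Lemma pts_meas s S : measurable (pts s S).
Proof. by apply: bigsetI_measurable => x _; apply: hC.1. Qed.

Lemma Cins_meas (s : seq (site d * {set {set dir d}})) :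
  measurable (\big[setI/setT]_(r <- s) Cin C r.1 r.2).
Proof. by apply: bigsetI_measurable => r _; apply: Cin_meas; apply: hC.1. Qed.

Lemma claim (s : seq (site d * {set {set dir d}})) s' S :
  uniq (map fst s ++ s') ->
  (P (pts s' S `&` \big[setI/setT]_(r <- s) Cin C r.1 r.2)
  <= ((\prod_(x <- s') @unif_k R d k (S x)) * \prod_(r <- s) muT r.2)%:E)%E.
Proof.
elim: s s' S => [|[x T] s IH] s' S /=.
  by move=> u; rewrite big_nil setIT big_nil mulr1 hC.2.
move=> u.
pose S' S0 y := if y == x then S0 else S y.
set Rest := \big[setI/setT]_(r <- s) Cin C r.1 r.2.
have sub : pts s' S `&` \big[setI/setT]_(r <- (x, T) :: s) Cin C r.1 r.2 `<=`
   \big[setU/set0]_(S0 | S0 \in T) (pts (x :: s') (S' S0) `&` Rest).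
  move=> om [/mem_bigsetI p1]; rewrite big_cons => -[/= CT Ro].
  apply: mem_bigsetU; exists (C x om); split => //; first exact: mem_index_enum.
  split => //; apply/mem_bigsetI => y; rewrite inE /S' /=.
  by case: eqP => [->//|_] /= /p1.
apply: le_trans (le_measure _ _ _ sub) _.
- by rewrite inE; apply: measurableI; [apply: pts_meas| apply: Cins_meas].
- by rewrite inE; apply: bigsetU_measurable => S0 _; apply: measurableI; [apply: pts_meas| apply: Cins_meas].
apply: le_trans (msub _ _ _) _.
  by move=> S0; apply: measurableI; [apply: pts_meas| apply: Cins_meas].
have xs' : x \notin s'.
  by move: u => /andP[+ _]; rewrite mem_cat negb_or => /andP[_ ->].
have u' : uniq (map fst s ++ x :: s').
  by rewrite -cat1s uniq_catCA cat1s.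
apply: (@le_trans _ _ (\sum_(S0 in T)
   ((\prod_(y <- x :: s') @unif_k R d k (S' S0 y)) * \prod_(r <- s) muT r.2)%:E)).
  by apply: lee_sum => S0 _; apply: IH.
rewrite sumEFin lee_fin big_cons /= /muT.
rewrite mulrCA big_distrl /= le_eqVlt; apply/orP; left; apply/eqP.
apply: eq_bigr => S0 _.
rewrite big_cons /S' eqxx -mulrA; congr (_ * (_ * _)).
rewrite big_seq_cond [RHS]big_seq_cond; apply: eq_bigr => y /andP[ys _].
by case: eqP => // yx; move: xs'; rewrite -yx ys.
Qed.

End Prob.
Section Count.
Context (d : nat).

Lemma count2 (a b : dir d) j : a != b ->
  #|[set S : {set dir d} | (a \in S) && (b \in S) && (#|S| == j.+2)]%SET| =
  'C(#|{: dir d}| - 2, j).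
Proof.
move=> ab; set B := [set a; b]%SET.
have cB : #|B| = 2%N by rewrite cards2 ab.
have cC : #|~: B| = (#|{: dir d}| - 2)%N by rewrite -(cardsC B) cB addKn.
have BK (A : {set dir d}) : A \subset ~: B -> (A :|: B) :\: B = A.
  move=> AB; apply/setP => x; rewrite !inE.
  case: (boolP (x \in A)) => xA /=; last by rewrite andNb.
  by move: (fintype.subsetP AB x xA); rewrite !inE => ->.
rewrite -cC -cards_draws.
rewrite -(@card_in_imset _ _ (fun A => A :|: B) [set A : {set dir d} | A \subset ~: B & #|A| == j]%SET).
  apply: eq_card => S; rewrite inE; apply/idP/imsetP.
    move=> /andP[/andP[aS bS] cS].
    have BS : B \subset S by apply/fintype.subsetP => x; rewrite !inE => /orP[]/eqP->.
    exists (S :\: B).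
      rewrite inE; apply/andP; split.
        by apply/fintype.subsetP => x; rewrite !inE => /andP[].
      by rewrite cardsDS // (eqP cS) cB !subSS subn0.
    apply/setP => x; rewrite finset.in_setU finset.in_setD.
    case: (boolP (x \in B)) => xB /=; last by rewrite orbF.
    by rewrite (fintype.subsetP BS x xB).
  move=> [A]; rewrite inE => /andP[AB cA] ->.
  rewrite !inE !eqxx !orbT /=.
  have AI : A :&: B = finset.set0.
    apply/setP => x; rewrite !inE; apply/negbTE; apply/negP => /andP[xA xB].
    by move: (fintype.subsetP AB x xA); rewrite !inE xB.
  by have := cardsUI A B; rewrite AI cards0 addn0 => ->; rewrite (eqP cA) cB addn2.
move=> A1 A2; rewrite !inE => /andP[s1 _] /andP[s2 _] e.
by rewrite -(BK _ s1) e BK.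
Qed.

Lemma card_dir : #|{: dir d}| = (2 * d)%N.
Proof. by rewrite card_prod card_ord card_bool mulnC. Qed.

End Count.
Lemma binid m j : ('C(m, j) * (m.+2 * m.+1) = (j.+2 * j.+1) * 'C(m.+2, j.+2))%N.
Proof.
have h1 := mul_bin_diag m.+1 j. have h2 := mul_bin_diag m.+2 j.+1. simpl in h1, h2.
by rewrite mulnCA mulnC (mulnC 'C(m, j)) h1 -mulnA (mulnC _ m.+2) h2 mulnA (mulnC j.+1).
Qed.

Lemma count_nat d k (a b : dir d) : (1 <= d)%N -> a != b ->
  (#|[set S : {set dir d} | (a \in S) && (b \in S) && (#|S| == k)]%SET| * ((2 * d) * (2 * d - 1))
   = (k * (k - 1)) * 'C(2 * d, k))%N.
Proof.
move=> d1 ab.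
have [m hm] : exists m, (2 * d = m.+2)%N by exists (2 * d - 2)%N; lia.
rewrite hm.
case: k => [|[|j]].
- rewrite (_ : #|_| = 0%N) //; apply: eq_card0 => S; rewrite !inE.
  apply/negP => /andP[/andP[aS bS] /eqP cS].
  have : (#|[set a; b]%SET| <= #|S|)%N.
    by apply: subset_leq_card; apply/fintype.subsetP => x; rewrite !inE => /orP[]/eqP->.
  by rewrite cards2 ab cS.
- rewrite (_ : #|_| = 0%N) //; apply: eq_card0 => S; rewrite !inE.
  apply/negP => /andP[/andP[aS bS] /eqP cS].
  have : (#|[set a; b]%SET| <= #|S|)%N.
    by apply: subset_leq_card; apply/fintype.subsetP => x; rewrite !inE => /orP[]/eqP->.
  by rewrite cards2 ab cS.
- rewrite count2 // card_dir hm.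
  rewrite (_ : (m.+2 - 2 = m)%N); last by lia.
  rewrite (_ : (m.+2 - 1 = m.+1)%N); last by lia.
  rewrite (_ : (j.+2 - 1 = j.+1)%N); last by lia.
  exact: binid.
Qed.
Section Prob2.
Context (R : realType) (d k : nat).

Lemma muT2 (a b : dir d) : (1 <= d)%N -> (k <= 2 * d)%N -> a != b ->
  muT R k [set S : {set dir d} | (a \in S) && (b \in S)]%SET =
  (k * (k - 1))%:R / ((2 * d) * (2 * d - 1))%:R.
Proof.
move=> d1 kd ab.
rewrite /muT /unif_k -big_mkcondr.
rewrite (eq_bigl (fun S => S \in [set S : {set dir d} | (a \in S) && (b \in S) && (#|S| == k)]%SET)); last by move=> S; rewrite !inE.
rewrite sumr_const; set N := #|_|; set c := (_%:R : R) in N *; rewrite -(mulr_natl c^-1 N).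
apply/eqP; rewrite eqr_div ?pnatr_eq0 -?lt0n ?bin_gt0 //; last first.
  by rewrite muln_gt0; apply/andP; split; lia.
by rewrite -!natrM count_nat.
Qed.

End Prob2.
Lemma sawE d n : saw_count d n = #|[set w : n.-tuple (dir d) | uniq (traj (origin d) w)]%SET|.
Proof.
apply: eq_card => w; rewrite finset.inE.
by apply/idP/idP; rewrite in_setE.
Qed.

Lemma step_opp d (v : dir d) : step (opp_dir v) = - step v.
Proof. apply/ffunP => j; rewrite !ffunE /=; case: (j == v.1); case: v.2 => //=; rewrite ?oppr0 ?opprK //. Qed.

Lemma traj_head d (x : site d) u : x \in traj x u.
Proof. by case: u => [|? ?] /=; rewrite mem_head. Qed.

Fixpoint reqs d (y : site d) (vp : dir d) (w : seq (dir d)) :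
    seq (site d * {set {set dir d}}) :=
  if w is v :: w' then
    (y, [set S : {set dir d} | (opp_dir vp \in S) && (v \in S)]%SET) :: reqs (y + step v) v w'
  else [::].

Lemma reqs_sub d (y : site d) vp w : subseq (map fst (reqs y vp w)) (traj y w).
Proof.
elim: w y vp => [|v w IH] y vp /=; first by [].
by rewrite eqxx; apply: IH.
Qed.

Section Paths.
Context (R : realType) (dd : measure_display) (Omega : measurableType dd)
  (P : probability Omega R) (d k : nat) (C : site d -> Omega -> {set dir d}).
Hypothesis hC : iid_uniform_choices P k C.
Hypothesis d1 : (1 <= d)%N.
Hypothesis kd : (k <= 2 * d)%N.

Let q : R := (k * (k - 1))%:R / ((2 * d) * (2 * d - 1))%:R.

Lemma wopen_reqs om y vp w : opp_dir vp \in C y om -> wopen C om y w ->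
  (\big[setI/setT]_(r <- reqs y vp w) Cin C r.1 r.2) om.
Proof.
elim: w y vp => [|v w IH] y vp /=; first by rewrite big_nil.
move=> h /andP[/andP[e1 e2] wo]; rewrite big_cons; split.
  by rewrite /Cin /= finset.inE h e1.
exact: IH.
Qed.

Lemma reqs_prod z y vp w : y = z + step vp -> uniq (z :: traj y w) ->
  \prod_(r <- reqs y vp w) @muT R d k r.2 = q ^+ size w.
Proof.
elim: w z y vp => [|v w IH] z y vp /=; first by rewrite big_nil.
move=> yE /andP[zn /andP[yn u]].
rewrite big_cons /= exprS muT2 //; last first.
  apply/negP => /eqP ev; move: zn; rewrite inE negb_or => /andP[_].
  by rewrite -ev step_opp yE -addrA subrr addr0 traj_head.
congr (_ * _); apply: (IH y) => //=; by rewrite yn u.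
Qed.

Lemma path_bound (v0 : dir d) (w : seq (dir d)) :
  uniq (traj (origin d) (v0 :: w)) ->
  (P [set om | wopen C om (origin d) (v0 :: w)] <= (q ^+ size w)%:E)%E.
Proof.
move=> u.
set y := origin d + step v0.
have sub : [set om | wopen C om (origin d) (v0 :: w)] `<=`
   pts C [::] (fun _ => finset.set0) `&` \big[setI/setT]_(r <- reqs y v0 w) Cin C r.1 r.2.
  move=> om /= /andP[/andP[e1 e2] wo].
  split; first by apply/mem_bigsetI.
  exact: wopen_reqs.
apply: le_trans (le_measure _ _ _ sub) _.
- by rewrite inE; apply: wopen_meas; apply: hC.1.
- by rewrite inE; apply: measurableI; [apply: (pts_meas hC)| apply: (Cins_meas hC)].
apply: le_trans; first apply: (claim hC).
  rewrite cats0; apply: subseq_uniq (reqs_sub _ _ _) _.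
  by move: u => /= /andP[].
rewrite big_nil mul1r (reqs_prod (z := origin d)) //.
Qed.

Lemma Aev_bound n :
  (P [set om | Aev C om n.+1] <= ((saw_count d n.+1)%:R * q ^+ n)%:E)%E.
Proof.
have sub : [set om | Aev C om n.+1] `<=`
   \big[setU/set0]_(w : n.+1.-tuple (dir d) | uniq (traj (origin d) w))
      [set om | wopen C om (origin d) w].
  move=> om [w /andP[u o]]; apply: mem_bigsetU; exists w; split => //.
apply: le_trans (le_measure _ _ _ sub) _.
- by rewrite inE; apply: Aev_meas; apply: hC.1.
- by rewrite inE; apply: bigsetU_measurable => w _; apply: wopen_meas; apply: hC.1.
apply: le_trans (msub _ _ _ _) _.
  by move=> w; apply: wopen_meas; apply: hC.1.
apply: (@le_trans _ _ (\sum_(w : n.+1.-tuple (dir d) | uniq (traj (origin d) w)) (q ^+ n)%:E)).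
  apply: lee_sum => -[[|v0 w] //= sz] u.
  have sw : size w = n by move: sz => /eqP [].
  by rewrite -sw; apply: path_bound.
rewrite sumEFin lee_fin.
rewrite (eq_bigl (fun w => w \in [set w : n.+1.-tuple (dir d) | uniq (traj (origin d) w)]%SET)); last by move=> w; rewrite finset.inE.
by rewrite sumr_const sawE mulr_natl.
Qed.

End Paths.
Unset Implicit Arguments.
Theorem lemma2p11 (R : realType) (d k : nat) (dd : measure_display)
  (Omega : measurableType dd) (P : probability Omega R)
  (C : site d -> Omega -> {set dir d}) :
  (1 <= d)%N -> (1 <= k <= 2 * d)%N ->
  ((k * (k - 1))%:R : R) < ((2 * d) * (2 * d - 1))%:R / conn_const R d ->
  iid_uniform_choices P k C ->
  P [set om | percolates C om] = 0%E.
Proof.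
move=> d1 /andP[k1 kd] H hC.
set L := conn_const R d in H.
set X : R := ((2 * d) * (2 * d - 1))%:R in H.
set K : R := (k * (k - 1))%:R in H.
pose u := fun n : nat => ((saw_count d n)%:R : R) `^ (n%:R)^-1.
have X0 : 0 < X by rewrite /X ltr0n muln_gt0; apply/andP; split; lia.
have L0 : 0 < L.
  have : 0 < X / L by apply: le_lt_trans H; exact: ler0n.
  by rewrite pmulr_rgt0 // invr_gt0.
have cv : u n @[n --> \oo] --> L.
  have : cvg (u n @[n --> \oo]).
    by apply: cvgNpoint; apply: (lt0r_neq0 L0).
  by [].
have ple n : (P [set om | percolates C om] <= P [set om | Aev C om n])%E.
  apply: le_measure; rewrite ?inE.
  - by apply: perc_meas; apply: hC.1.
  - by apply: Aev_meas; apply: hC.1.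
  by move=> om /= pc; apply: perc_Aev.
set q : R := K / X.
have q0 : 0 <= q by rewrite /q divr_ge0 // ltW.
have qL : q * L < 1.
  by rewrite /q mulrAC ltr_pdivrMr // mul1r -ltr_pdivlMr.
apply/eqP; rewrite eq_le measure_ge0 andbT.
apply/lee_addgt0Pr => e e0; rewrite add0e.
have [qz|qp] := eqVneq q 0.
  apply: le_trans (ple 2%N) _; apply: le_trans (Aev_bound hC d1 kd 1) _.
  by rewrite -/K -/X -/q qz expr1 mulr0 lee_fin ltW.
have {qp} qp : 0 < q by rewrite lt0r qp q0.
have Lq : L < q^-1 by rewrite -[q^-1]mulr1 ltr_pdivlMl // ?invr_gt0 // invrK mulrC.
pose t := (L + q^-1) / 2.
have [Lt tq] := midf_lt Lq.
have t0 : 0 < t by apply: lt_trans Lt.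
pose r := t * q.
have r0 : 0 <= r by rewrite /r mulr_ge0 // ltW.
have r1 : r < 1 by rewrite /r -ltr_pdivlMr // div1r.
have ev1 := cvgr_lt L cv t Lt.
have ev2 : \forall n \near \oo, `|r ^+ (n : nat)| < e / t.
  apply: cvgr0_norm_lt; last exact: divr_gt0.
  by apply: cvg_expr; rewrite ger0_norm.
have [N1 _ H1] := ev1.
have [N2 _ H2] := ev2.
pose m := maxn N1 N2.
have hu : u m.+1 < t by apply: H1; rewrite /= (leq_trans (leq_maxl N1 N2)).
have hr : `|r ^+ m| < e / t by apply: H2; rewrite /= leq_maxr.
apply: le_trans (ple m.+1) _; apply: le_trans (Aev_bound hC d1 kd m) _.
rewrite -/K -/X -/q lee_fin.
set c : R := (saw_count d m.+1)%:R.
have cE : c = u m.+1 ^+ m.+1.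
  rewrite /u -powR_mulrn ?powR_ge0 // -powRrM mulVf ?pnatr_eq0 // powRr1 //.
have cle : c <= t ^+ m.+1.
  by rewrite cE; apply: lerXn2r; rewrite ?nnegrE ?powR_ge0 ?ltW.
apply: le_trans (ler_wpM2r (exprn_ge0 _ q0) cle) _.
rewrite exprS -mulrA -exprMn -/r.
have h : r ^+ m <= e / t by apply: ltW; rewrite -(ger0_norm (exprn_ge0 m r0)).
apply: le_trans (ler_wpM2l (ltW t0) h) _.
by rewrite mulrCA divff ?mulr1 // gt_eqF.
Qed.
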